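(* Assume the decisional Diffie–Hellman problem is hard for the group generator $Gen$ (which outputs groups of prime order). Then the hash system $(PG,IS,DI,KG,Hash,pHash)$ described in the context is a smooth projective hash family that holds properties distinguishability and hard subset membership (SPHDH).
   Context: $Gen(1^k)$ randomly chooses a cyclic group of prime order and outputs its description $\langle g,q,*\rangle$ (generator $g$, order $q$). DDH is hard: $DDH_1\stackrel{c}{=}DDH_2$, where $DDH_1(1^k)$ outputs $(\langle g,q,*\rangle,g^a,g^b,g^{ab})$ and $DDH_2(1^k)$ outputs $(\langle g,q,*\rangle,g^a,g^b,g^c)$, with $\langle g,q,*\rangle\leftarrow Gen(1^k)$ and $a,b,c$ uniform in $\mathbb Z_q$; $\stackrel{c}{=}$ is computational indistinguishability against non-uniform PPT distinguishers. Hash system: $PG(1^k)$ outputs $\Lambda\leftarrow Gen(1^k)$. $IS(1^k,\Lambda,\delta)$: pick uniform $a,b,c\in\mathbb Z_q$; if $\delta=0$ output $(\dot x,\dot w)=((g^a,g^b,g^{ab}),(a,b))$; if $\delta=1$ output $(\ddot x,\ddot w)=((g^a,g^b,g^c),(a,b))$. $DI(1^k,\Lambda,(\alpha,\beta,\gamma),(a,b))$ outputs $0$ if $(\alpha,\beta,\gamma)=(g^a,g^b,g^{ab})$ and $1$ if $(\alpha,\beta)=(g^a,g^b)$ and $\gamma\ne g^{ab}$. $KG(1^k,\Lambda,(\alpha,\beta,\gamma))$: uniform $u,v\in\mathbb Z_q$, $pk=\alpha^ug^v$, $hk=\gamma^u\beta^v$, output $(hk,pk)$. $Hash(1^k,\Lambda,x,hk)=hk$.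 $pHash(1^k,\Lambda,x,pk,(a,b))=pk^b$. SPHDH means: with $\dot R_\Lambda=\bigcup_kRange(IS(1^k,\Lambda,0))$, $\ddot R_\Lambda=\bigcup_kRange(IS(1^k,\Lambda,1))$: (projection) for all sufficiently large $k$, $\Lambda\in Range(PG(1^k))$, $(\dot x,\dot w)\in Range(IS(1^k,\Lambda,0))$, $(hk,pk)\in Range(KG(1^k,\Lambda,\dot x))$: $Hash(1^k,\Lambda,\dot x,hk)=pHash(1^k,\Lambda,\dot x,pk,\dot w)$; (distinguishability) $DI$ outputs $0$ on pairs in $\dot R_\Lambda$ and $1$ on pairs in $\ddot R_\Lambda$; (smoothness) $Sm_1\stackrel{c}{=}Sm_2$, where $Sm_1(1^k)$: $\Lambda\leftarrow PG(1^k)$, $(\ddot x,\ddot w)\leftarrow IS(1^k,\Lambda,1)$, $(hk,pk)\leftarrow KG(1^k,\Lambda,\ddot x)$, $y\leftarrow Hash(1^k,\Lambda,\ddot x,hk)$, output $(\Lambda,\ddot x,pk,y)$, and $Sm_2$ is the same with $y$ uniform in $Range(Hash(1^k,\Lambda,\ddot x,\cdot))$; (hard subset membership) $Hm_1\stackrel{c}{=}Hm_2$ where $Hm_1(1^k)=(\Lambda,\dot x)$, $(\dot x,\cdot)\leftarrow IS(1^k,\Lambda,0)$, and $Hm_2(1^k)=(\Lambda,\ddot x)$, $(\ddot x,\cdot)\leftarrow IS(1^k,\Lambda,1)$, with $\Lambda\leftarrow PG(1^k)$.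
   Formalization: In $IS(1^k,\Lambda,1)$ the exponent $c$ is uniform on $\mathbb Z_q$ without the residue ab mod q, rather than on all of $\mathbb Z_q$, while $DDH_2$ still draws $c$ uniformly from $\mathbb Z_q$. Apart from conventions, each condition added here is assumed in the paper as well or is needed for the statement above to hold. *)

(* Defs.v *)
From HB Require Import structures.
From Stdlib Require List.
From mathcomp Require Import all_boot all_order all_algebra fingroup.
Unset Implicit Arguments.
Unset Strict Implicit.
Unset Printing Implicit Defensive.
Import GRing.Theory Num.Theory.

Definition dist (T : Type) := seq (rat * T).

Definition dret {T : Type} (x : T) : dist T := [:: (1%R, x)].

Definition dbind {T U : Type} (d : dist T) (f : T -> dist U) : dist U :=
  flatten [seq [seq ((p.1 * r.1)%R, r.2) | r <- f p.2] | p <- d].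

Definition dunif {T : Type} (s : seq T) : dist T :=
  [seq (((size s)%:R)^-1%R, x) | x <- s].

Definition Pr {T : Type} (d : dist T) (P : T -> bool) : rat :=
  (\sum_(p <- d) p.1 * (P p.2)%:R)%R.

Definition is_dist {T : Type} (d : dist T) : Prop :=
  (forall p, List.In p d -> (0 <= p.1)%R) /\ (\sum_(p <- d) p.1)%R = 1%R.

Definition supp {T : Type} (d : dist T) (x : T) : Prop :=
  exists2 p, List.In p d & p.2 = x /\ (0 < p.1)%R.

Definition negligible (f : nat -> rat) : Prop :=
  forall c : nat, exists N : nat, forall k : nat, (N <= k)%N ->
    (`|f k| < ((k ^ c)%:R)^-1)%R.

(* [Eff T D] : the family of (non-uniform) distinguishers D = (D_k)_k on
   inputs of type T is efficient.  Computational indistinguishability of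
   ensembles X, Y relative to Eff: *)
Definition comp_indist (Eff : forall T : Type, (nat -> T -> bool) -> Prop)
    {T : Type} (X Y : nat -> dist T) : Prop :=
  forall D : nat -> T -> bool, Eff T D ->
    negligible (fun k => (Pr (X k) (D k) - Pr (Y k) (D k))%R).

Record gdesc := GDesc {
  gT : finGroupType;
  gen : gT;
  gen_generates : (<[gen]> = [set: gT])%g;
  order_prime : prime #|gT| }.

Definition gq (L : gdesc) : nat := #|gT L|.

Definition Zq (L : gdesc) : seq nat := iota 0 (gq L).

Definition gexp (L : gdesc) (n : nat) : gT L := (gen L ^+ n)%g.

Definition DDH_out := {L : gdesc & (gT L * gT L * gT L)%type}.

Definition DDH1 (Gen : nat -> dist gdesc) (k : nat) : dist DDH_out :=
  dbind (Gen k) (fun L =>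
  dbind (dunif (Zq L)) (fun a =>
  dbind (dunif (Zq L)) (fun b =>
  dret (existT (fun L => (gT L * gT L * gT L)%type) L
          (gexp L a, gexp L b, gexp L (a * b)))))).

Definition DDH2 (Gen : nat -> dist gdesc) (k : nat) : dist DDH_out :=
  dbind (Gen k) (fun L =>
  dbind (dunif (Zq L)) (fun a =>
  dbind (dunif (Zq L)) (fun b =>
  dbind (dunif (Zq L)) (fun c =>
  dret (existT (fun L => (gT L * gT L * gT L)%type) L
          (gexp L a, gexp L b, gexp L c)))))).

Definition DDH_hard (Eff : forall T : Type, (nat -> T -> bool) -> Prop)
    (Gen : nat -> dist gdesc) : Prop :=
  comp_indist Eff (DDH1 Gen) (DDH2 Gen).

(* Brute-force discrete-log test for polynomially small groups
   (q <= k^c): a polynomial-time algorithm, assumed to be efficient. *)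
Definition dlog_test (c : nat) (k : nat) (t : DDH_out) : bool :=
  let L := projT1 t in
  let '(al, be, ga) := projT2 t in
  (gq L <= k ^ c)%N &&
  has (fun i => (be == gexp L i) && (ga == (al ^+ i)%g)) (iota 0 (gq L)).

(* Bits 0/1 are encoded as false/true.                                 *)
Record hash_system := HashSystem {
  Lam : Type;
  Xt : Lam -> Type;
  Wt : Lam -> Type;
  HKt : Lam -> finType;
  PKt : Lam -> Type;
  Yt : Lam -> eqType;
  PG : nat -> dist Lam;
  IS : nat -> forall L : Lam, bool -> dist (Xt L * Wt L);
  DI : nat -> forall L : Lam, Xt L -> Wt L -> bool;
  KG : nat -> forall L : Lam, Xt L -> dist (HKt L * PKt L);
  Hash : nat -> forall L : Lam, Xt L -> HKt L -> Yt L;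
  pHash : nat -> forall L : Lam, Xt L -> PKt L -> Wt L -> Yt L }.
Arguments Xt : clear implicits.  Arguments Wt : clear implicits.
Arguments HKt : clear implicits. Arguments PKt : clear implicits.
Arguments Yt : clear implicits.  Arguments PG : clear implicits.
Arguments IS : clear implicits.  Arguments DI : clear implicits.
Arguments KG : clear implicits.  Arguments Hash : clear implicits.
Arguments pHash : clear implicits.

Section SPH.
Variable H : hash_system.

Definition Rdot (L : Lam H) (x : Xt H L) (w : Wt H L) : Prop :=
  exists k, supp (IS H k L false) (x, w).
Definition Rddot (L : Lam H) (x : Xt H L) (w : Wt H L) : Prop :=
  exists k, supp (IS H k L true) (x, w).

Definition projection_prop : Prop :=
  exists N, forall k, (N <= k)%N ->
    forall L, supp (PG H k) L ->
    forall x w, supp (IS H k L false) (x, w) ->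
    forall hk pk, supp (KG H k L x) (hk, pk) ->
      Hash H k L x hk = pHash H k L x pk w.

Definition distinguishability_prop : Prop :=
  forall k L, supp (PG H k) L -> forall x w,
    (Rdot L x w -> DI H k L x w = false) /\
    (Rddot L x w -> DI H k L x w = true).

Definition Sm_out := {L : Lam H & (Xt H L * PKt H L * Yt H L)%type}.

Definition Sm1 (k : nat) : dist Sm_out :=
  dbind (PG H k) (fun L =>
  dbind (IS H k L true) (fun xw =>
  dbind (KG H k L xw.1) (fun kp =>
  let y := Hash H k L xw.1 kp.1 in
  dret (existT (fun L => (Xt H L * PKt H L * Yt H L)%type) L
          (xw.1, kp.2, y))))).

Definition Sm2 (k : nat) : dist Sm_out :=
  dbind (PG H k) (fun L =>
  dbind (IS H k L true) (fun xw =>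
  dbind (KG H k L xw.1) (fun kp =>
  dbind (dunif (undup [seq Hash H k L xw.1 hk | hk <- enum (HKt H L)]))
        (fun y =>
  dret (existT (fun L => (Xt H L * PKt H L * Yt H L)%type) L
          (xw.1, kp.2, y)))))).

Definition Hm_out := {L : Lam H & Xt H L}.

Definition Hm1 (k : nat) : dist Hm_out :=
  dbind (PG H k) (fun L =>
  dbind (IS H k L false) (fun xw => dret (existT (fun L => Xt H L) L xw.1))).

Definition Hm2 (k : nat) : dist Hm_out :=
  dbind (PG H k) (fun L =>
  dbind (IS H k L true) (fun xw => dret (existT (fun L => Xt H L) L xw.1))).

Definition SPHDH (Eff : forall T : Type, (nat -> T -> bool) -> Prop) : Prop :=
  [/\ projection_prop,
      distinguishability_prop,
      comp_indist Eff Sm1 Sm2 &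
      comp_indist Eff Hm1 Hm2].
End SPH.

Definition ddhX (L : gdesc) : Type := (gT L * gT L * gT L)%type.
Definition ddhW (L : gdesc) : Type := (nat * nat)%type.

Definition ddh_IS (k : nat) (L : gdesc) (d : bool) : dist (ddhX L * ddhW L) :=
  dbind (dunif (Zq L)) (fun a =>
  dbind (dunif (Zq L)) (fun b =>
  if ~~ d then dret ((gexp L a, gexp L b, gexp L (a * b)), (a, b))
  else
    dbind (dunif [seq c <- Zq L | c != (a * b) %% gq L]) (fun c =>
    dret ((gexp L a, gexp L b, gexp L c), (a, b))))).

Definition ddh_DI (k : nat) (L : gdesc) (x : ddhX L) (w : ddhW L) : bool :=
  let '(al, be, ga) := x in ga != gexp L (w.1 * w.2).

Definition ddh_KG (k : nat) (L : gdesc) (x : ddhX L) : dist (gT L * gT L) :=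
  let '(al, be, ga) := x in
  dbind (dunif (Zq L)) (fun u =>
  dbind (dunif (Zq L)) (fun v =>
  dret (((ga ^+ u) * (be ^+ v))%g, ((al ^+ u) * gexp L v)%g))).

Definition ddh_Hash (k : nat) (L : gdesc) (x : ddhX L) (hk : gT L) : gT L := hk.

Definition ddh_pHash (k : nat) (L : gdesc) (x : ddhX L) (pk : gT L)
    (w : ddhW L) : gT L := (pk ^+ w.2)%g.

Definition ddh_hash_system (Gen : nat -> dist gdesc) : hash_system :=
  @HashSystem gdesc ddhX ddhW (fun L => gT L) (fun L => gT L) (fun L => gT L)
    Gen ddh_IS ddh_DI ddh_KG ddh_Hash ddh_pHash.

(* Main.v *)
Set Warnings "-notation-overridden,-ambiguous-paths,-notation-incompatible-prefix".
Require Import Defs.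
From mathcomp Require Import all_boot all_order all_algebra fingroup.
From mathcomp Require Import cyclic.
From mathcomp Require Import ring lra.
Set Warnings "-notation-overridden,-ambiguous-paths".
Import Order.TTheory GRing.Theory Num.Theory.

Local Open Scope ring_scope.

Definition Ex {T : Type} (d : dist T) (g : T -> rat) : rat :=
  \sum_(p <- d) p.1 * g p.2.

Lemma Pr_Ex {T : Type} (d : dist T) P : Pr d P = Ex d (fun x => (P x)%:R).
Proof. by []. Qed.

Lemma Ex_dbind {T U : Type} (d : dist T) (f : T -> dist U) g :
  Ex (dbind d f) g = Ex d (fun x => Ex (f x) g).
Proof.
rewrite /Ex /dbind big_flatten /= big_map; apply: eq_bigr => p _.
rewrite big_map mulr_sumr; apply: eq_bigr => r _ /=; by rewrite mulrA.
Qed.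

Lemma Ex_dret {T : Type} (x : T) g : Ex (dret x) g = g x.
Proof. by rewrite /Ex /dret big_seq1 mul1r. Qed.

Lemma Ex_dunif {T : Type} (s : seq T) g :
  Ex (dunif s) g = (size s)%:R^-1 * \sum_(x <- s) g x.
Proof. by rewrite /Ex /dunif big_map mulr_sumr. Qed.

Lemma Ex_eq {T : Type} (d : dist T) f g : (forall x, f x = g x) -> Ex d f = Ex d g.
Proof. by move=> H; apply: eq_bigr => p _; rewrite H. Qed.

Lemma Ex_unif_eq {T : eqType} (s : seq T) f g :
  (forall x, x \in s -> f x = g x) -> Ex (dunif s) f = Ex (dunif s) g.
Proof. by move=> H; rewrite !Ex_dunif big_seq [in RHS]big_seq; congr (_ * _); apply: eq_bigr => x /H. Qed.

Lemma Ex_lin {T : Type} (d : dist T) a b f g :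
  Ex d (fun x => a * f x + b * g x) = a * Ex d f + b * Ex d g.
Proof. rewrite /Ex !mulr_sumr -big_split; apply: eq_bigr => p _ /=; ring. Qed.

Lemma Ex_sub {T : Type} (d : dist T) f g :
  Ex d (fun x => f x - g x) = Ex d f - Ex d g.
Proof. rewrite /Ex -sumrB; apply: eq_bigr => p _ /=; ring. Qed.

Definition nonneg {T : Type} (d : dist T) := forall p, List.In p d -> 0 <= p.1.

Lemma nonneg_unif {T : Type} (s : seq T) : nonneg (dunif s).
Proof. move=> p /List.in_map_iff [x [<- _]] /=; by rewrite invr_ge0 ler0n. Qed.

Lemma Ex_ler {T : Type} (d : dist T) f g : nonneg d ->
  (forall x, f x <= g x) -> Ex d f <= Ex d g.
Proof.
rewrite /Ex; elim: d => [|p d IH] Hn H; first by rewrite !big_nil.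
rewrite !big_cons; apply: lerD.
  by apply: ler_wpM2l; [apply: Hn; left|].
by apply: IH => // q Hq; apply: Hn; right.
Qed.

Lemma Ex_norm {T : Type} (d : dist T) f : nonneg d ->
  `|Ex d f| <= Ex d (fun x => `|f x|).
Proof.
rewrite /Ex; elim: d => [|p d IH] Hn; first by rewrite !big_nil normr0.
rewrite !big_cons; apply: (le_trans (ler_normD _ _)); apply: lerD.
  by rewrite normrM ger0_norm //; apply: Hn; left.
by apply: IH => // q Hq; apply: Hn; right.
Qed.

Lemma sum_cst {T : Type} (s : seq T) (c : rat) : \sum_(x <- s) c = (size s)%:R * c.
Proof. elim: s => [|x s IH]; rewrite ?big_nil ?mul0r // big_cons IH /= -addn1 natrD; ring. Qed.

Lemma Ex_unif_cst {T : Type} (s : seq T) c : s <> [::] -> Ex (dunif s) (fun _ => c) = c.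
Proof.
move=> Hs; rewrite Ex_dunif sum_cst mulrA mulVf ?mul1r //.
by rewrite pnatr_eq0; case: s Hs.
Qed.

Lemma Ex_total {T : Type} (d : dist T) c : is_dist d -> Ex d (fun _ => c) = c.
Proof. by case=> _ H; rewrite /Ex -mulr_suml H mul1r. Qed.
Section G.
Variable L : gdesc.
Local Notation q := (gq L).
Local Open Scope group_scope.

Lemma order_gen : #[gen L] = q.
Proof. by rewrite /order gen_generates cardsT. Qed.

Lemma q_gt1 : (1 < q)%N.
Proof. exact: prime_gt1 (order_prime L). Qed.

Lemma comm_all (x y : gT L) : commute x y.
Proof.
have: x \in <[gen L]> by rewrite gen_generates inE.
have: y \in <[gen L]> by rewrite gen_generates inE.
case/cycleP => j -> /cycleP [i ->]; exact: commuteX2.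
Qed.

Lemma order_nt (e : gT L) : e != 1 -> #[e] = q.
Proof.
move=> He; have := order_dvdG (in_setT e); rewrite cardsT.
case/primeP: (order_prime L) => _ H /H /orP [] /eqP // H1.
by move: He; rewrite -order_eq1 H1.
Qed.

Lemma gexp_eq m n : (gexp L m == gexp L n) = (m == n %[mod q]).
Proof. by rewrite /gexp eq_expg_mod_order order_gen. Qed.

Lemma gen_nt : gen L != 1.
Proof. by rewrite -order_gt1 order_gen q_gt1. Qed.

Lemma key_bij (e t : gT L) (F : gT L -> rat) : e != 1 ->
  (\sum_(u <- Zq L) F (e ^+ u * t)%g = \sum_(y : gT L) F y)%R.
Proof.
move=> He; rewrite -(big_map (fun u => e ^+ u * t) xpredT F).
apply: perm_big.
have Hu : uniq [seq e ^+ u * t | u <- Zq L].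
  rewrite map_inj_in_uniq ?iota_uniq // => u v; rewrite /Zq !mem_iota !add0n => Hu Hv.
  move/mulIg/eqP; rewrite eq_expg_mod_order order_nt // !modn_small //; by move/eqP.
apply: uniq_perm => //; first exact: index_enum_uniq.
have Hs : {subset [seq e ^+ u * t | u <- Zq L] <= index_enum (gT L)}.
  by move=> y _; rewrite mem_index_enum.
have Hsz : leq (size (index_enum (gT L))) (size [seq e ^+ u * t | u <- Zq L]).
  by rewrite size_map size_iota [index_enum _]unlock -enumT -cardT.
by have [] := uniq_min_size Hu Hs Hsz.
Qed.
End G.

Lemma sum_enum (T : finType) (F : T -> rat) : \sum_(y <- enum T) F y = \sum_(y : T) F y.
Proof.
apply: perm_big; apply: uniq_perm; rewrite ?enum_uniq ?index_enum_uniq // => x.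
by rewrite mem_enum mem_index_enum.
Qed.

Lemma size_Zq L : size (Zq L) = gq L.
Proof. by rewrite /Zq size_iota. Qed.

Lemma size_enumT L : size (enum (gT L)) = gq L.
Proof. by rewrite -cardT. Qed.

Lemma q_neq0 L : (gq L)%:R != 0 :> rat.
Proof. by rewrite pnatr_eq0 -lt0n ltnW // q_gt1. Qed.

Lemma Ex_IS_false k L G : Ex (ddh_IS k L false) G =
  Ex (dunif (Zq L)) (fun a => Ex (dunif (Zq L)) (fun b =>
     G ((gexp L a, gexp L b, gexp L (a * b)), (a, b)))).
Proof.
rewrite /ddh_IS Ex_dbind; apply: Ex_eq => a; rewrite Ex_dbind; apply: Ex_eq => b.
by rewrite /= Ex_dret.
Qed.

Definition filt L a b := [seq c <- Zq L | c != ((a * b) %% gq L)%N].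

Lemma Ex_IS_true k L G : Ex (ddh_IS k L true) G =
  Ex (dunif (Zq L)) (fun a => Ex (dunif (Zq L)) (fun b =>
  Ex (dunif (filt L a b)) (fun c =>
     G ((gexp L a, gexp L b, gexp L c), (a, b))))).
Proof.
rewrite /ddh_IS Ex_dbind; apply: Ex_eq => a; rewrite Ex_dbind; apply: Ex_eq => b.
rewrite /= Ex_dbind; apply: Ex_eq => c; by rewrite Ex_dret.
Qed.

Lemma Ex_KG k L al be ga G : Ex (ddh_KG k L (al, be, ga)) G =
  Ex (dunif (Zq L)) (fun u => Ex (dunif (Zq L)) (fun v =>
     G ((ga ^+ u * be ^+ v)%g, (al ^+ u * gexp L v)%g))).
Proof.
rewrite /ddh_KG Ex_dbind; apply: Ex_eq => u; rewrite Ex_dbind; apply: Ex_eq => v.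
by rewrite Ex_dret.
Qed.

Lemma grp_id L (ga al z : gT L) u b :
  (ga ^+ u * ((al ^+ u)^-1 * z) ^+ b = (ga * (al ^+ b)^-1) ^+ u * z ^+ b)%g.
Proof.
rewrite !(expgMn _ (comm_all _ _ _)) !expgVn expgAC mulgA.
reflexivity.
Qed.

Lemma smooth_core L (h : gT L -> gT L -> rat) a b c :
  (c < gq L)%N -> c != ((a * b) %% gq L)%N ->
  Ex (dunif (Zq L)) (fun u => Ex (dunif (Zq L)) (fun v =>
      h (gexp L c ^+ u * gexp L b ^+ v)%g (gexp L a ^+ u * gexp L v)%g))
  = Ex (dunif (Zq L)) (fun u => Ex (dunif (Zq L)) (fun v =>
      Ex (dunif (enum (gT L))) (fun y => h y (gexp L a ^+ u * gexp L v)%g))).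
Proof.
move=> Hc Hne.
set S := \sum_(z : gT L) \sum_(y : gT L) h y z.
set r := (gq L)%:R^-1 : rat.
have Hd : (gexp L c * (gexp L a ^+ b)^-1 != 1)%g.
  rewrite -eq_mulgV1 -expgM -/(gexp L (a * b)) gexp_eq modn_small //.
transitivity (r * r * S).
  rewrite Ex_dunif size_Zq -/r.
  transitivity (r * \sum_(u <- Zq L) r * \sum_(z : gT L)
       h ((gexp L c * (gexp L a ^+ b)^-1) ^+ u * z ^+ b)%g z).
    congr (_ * _); apply: eq_bigr => u _; rewrite Ex_dunif size_Zq -/r; congr (_ * _).
    transitivity (\sum_(v <- Zq L) (fun w => h (gexp L c ^+ u * w ^+ b)%g (gexp L a ^+ u * w)%g) (gen L ^+ v * 1)%g).
      apply: eq_bigr => v _ /=; by rewrite mulg1 /gexp (expgAC (gen L) b v).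
    rewrite (key_bij L (gen L) 1%g (fun w => h (gexp L c ^+ u * w ^+ b)%g (gexp L a ^+ u * w)%g) (gen_nt L)).
    rewrite (reindex_inj (mulgI (gexp L a ^+ u)^-1)%g) /=.
    by apply: eq_bigr => z _; rewrite mulKVg grp_id.
  rewrite -mulr_sumr mulrA; congr (_ * _).
  rewrite exchange_big /S; apply: eq_bigr => z _.
  exact: (key_bij L _ _ (fun y => h y z) Hd).
symmetry; rewrite Ex_dunif size_Zq -/r.
transitivity (r * \sum_(u <- Zq L) r * \sum_(z : gT L) r * \sum_(y : gT L) h y z).
  congr (_ * _); apply: eq_bigr => u _; rewrite Ex_dunif size_Zq -/r; congr (_ * _).
  transitivity (\sum_(v <- Zq L) (fun w => Ex (dunif (enum (gT L))) (fun y => h y w)) (gen L ^+ v * gexp L a ^+ u)%g).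
    by apply: eq_bigr => v _ /=; rewrite comm_all.
  rewrite (key_bij L (gen L) (gexp L a ^+ u)%g (fun w => Ex (dunif (enum (gT L))) (fun y => h y w)) (gen_nt L)).
  apply: eq_bigr => z _.
  by rewrite Ex_dunif size_enumT sum_enum.
rewrite sum_cst size_Zq /S mulr_sumr.
have : (gq L)%:R * r = 1 by rewrite mulfV ?q_neq0.
move=> Hq; rewrite -!mulr_sumr -/S.
transitivity ((gq L)%:R * r * (r * r * S)); first ring.
by rewrite Hq mul1r.
Qed.

Lemma neg_final (hm dd : nat -> rat) (S dl : nat -> nat -> rat) :
  negligible dd -> (forall c, negligible (dl c)) ->
  (forall c k, (0 < k)%N -> `|hm k - dd k| <= S c k + ((k ^ c)%:R)^-1) ->
  (forall c k, S c k <= 2 * dl c k) -> negligible hm.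
Proof.
move=> Hdd Hdl Hb HS c.
have [N1 H1] := Hdd (c + 2)%N; have [N2 H2] := Hdl (c + 2)%N (c + 2)%N.
exists (maxn (maxn N1 N2) 2) => k; rewrite !geq_max => /andP [/andP [k1 k2] k3].
have := H1 k k1; have := H2 k k2; have := Hb (c + 2)%N k (ltn_trans (isT : (0 < 1)%N) k3).
have := HS (c + 2)%N k.
rewrite expnD natrM invfM.
set x := ((k ^ c)%:R)^-1 : rat; set t := ((k ^ 2)%:R)^-1 : rat.
have x0 : 0 <= x by rewrite invr_ge0 ler0n.
have t0 : 0 <= t by rewrite invr_ge0 ler0n.
have kk : (k ^ 2)%:R * t = 1 :> rat.
  have kp : (0 < k)%N by apply: ltn_trans k3.
  by rewrite mulfV // pnatr_eq0 -lt0n expn_gt0 kp.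
have k4 : 4 <= (k ^ 2)%:R :> rat.
  rewrite (_ : 4 = (2 ^ 2)%:R) ?ler_nat ?leq_exp2r //; by [].
have t4 : 4 * t <= 1 by nra.
move=> hS hb hdl hdd.
have e1 := ler_norm (dl (c + 2)%N k).
have : `|hm k| <= `|dd k| + `|hm k - dd k|.
  by rewrite -[hm k in X in X <= _](subrK (dd k)) addrC (le_trans (ler_normD _ _)) // addrC.
move=> h.
have hxt : 0 <= x * t by apply: mulr_ge0.
move: hdd hdl hb; set y := x * t => hdd hdl hb.
have : `|hm k| < 4 * y by lra.
move=> h2; apply: (lt_le_trans h2); rewrite /y; nra.
Qed.

Definition inls {T : Type} (d : dist T) (y : T) := exists2 p, List.In p d & p.2 = y.

Lemma supp_inls {T : Type} (d : dist T) y : supp d y -> inls d y.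
Proof. by case=> p Hp [H _]; exists p. Qed.

Lemma In_cat {T : Type} (x : T) s1 s2 : List.In x (s1 ++ s2) -> List.In x s1 \/ List.In x s2.
Proof. exact: List.in_app_or. Qed.

Lemma inls_dbind {T U : Type} (d : dist T) (f : T -> dist U) y :
  inls (dbind d f) y -> exists2 x, inls d x & inls (f x) y.
Proof.
case=> r Hr Hy; elim: d Hr => [|p d IH] //.
rewrite /dbind /= => /(@In_cat _ r) [].
  move=> /List.in_map_iff [r' [E Hr']]; move: Hy; rewrite -E /= => Hy.
  by exists p.2; [exists p; [left|] | exists r'].
move=> /IH [x [p' Hp' Ex] Hx]; exists x => //; exists p' => //; right.
exact: Hp'.
Qed.

Lemma inls_dret {T : Type} (x y : T) : inls (dret x) y -> y = x.
Proof. by case=> p [<- | []] <-. Qed.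

Lemma In_mem {T : eqType} (x : T) s : List.In x s -> x \in s.
Proof. elim: s => [|y s IH] //= [-> | /IH H]; rewrite inE ?eqxx ?H ?orbT //. Qed.

Lemma inls_dunif {T : eqType} (s : seq T) y : inls (dunif s) y -> y \in s.
Proof. by case=> p /List.in_map_iff [x [<- Hx]] /= <-; apply: In_mem. Qed.

Arguments inls_dbind {T U d f y}.
Arguments inls_dret {T x y}.
Arguments inls_dunif {T s y}.
Arguments supp_inls {T d y}.

Lemma inls_IS_false k L x w : inls (ddh_IS k L false) (x, w) ->
  exists a b, x = (gexp L a, gexp L b, gexp L (a * b)) /\ w = (a, b).
Proof.
case/inls_dbind => a _ /inls_dbind [b _] /= /inls_dret [-> ->]; by exists a, b.
Qed.

Lemma inls_IS_true k L x w : inls (ddh_IS k L true) (x, w) ->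
  exists a b c, x = (gexp L a, gexp L b, gexp L c) /\ w = (a, b) /\ c \in filt L a b.
Proof.
case/inls_dbind => a _ /inls_dbind [b _] /= /inls_dbind [c Hc /inls_dret [-> ->]].
by exists a, b, c; do !split; exact: inls_dunif Hc.
Qed.

Lemma inls_KG k L al be ga hk pk : inls (ddh_KG k L (al, be, ga)) (hk, pk) ->
  exists u v, hk = (ga ^+ u * be ^+ v)%g /\ pk = (al ^+ u * gexp L v)%g.
Proof.
case/inls_dbind => u _ /inls_dbind [v _] /inls_dret [-> ->]; by exists u, v.
Qed.

Arguments inls_IS_false {k L x w}.
Arguments inls_IS_true {k L x w}.
Arguments inls_KG {k L al be ga hk pk}.

Lemma projection_ok Gen : projection_prop (ddh_hash_system Gen).
Proof.
exists 0%N => k _ L _ x w /supp_inls H.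
have [a [b [Hx Hw]]] := @inls_IS_false k L x w H; subst x w => hk pk.
move=> /supp_inls H2; have [u [v [Hh Hp]]] := @inls_KG k L _ _ _ hk pk H2; subst hk pk => /=.
rewrite /ddh_Hash /ddh_pHash /=.
rewrite (expgMn _ (comm_all _ _ _)) /gexp -!expgM -!expgD.
by rewrite [(v * b)%N]mulnC [(u * b)%N]mulnC mulnA.
Qed.

Lemma distinguish_ok Gen : distinguishability_prop (ddh_hash_system Gen).
Proof.
move=> k L _ x w; split.
  case=> k' /supp_inls H; have [a [b [Hx Hw]]] := @inls_IS_false k' L x w H; subst x w => /=; by rewrite eqxx.
case=> k' /supp_inls H; have [a [b [c [Hx [Hw Hc]]]]] := @inls_IS_true k' L x w H; subst x w => /=.
move: Hc; rewrite /filt mem_filter mem_iota add0n => /andP [Hne Hcq].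
by rewrite gexp_eq modn_small.
Qed.

Lemma Ex_KG' k L (x : ddhX L) G : Ex (ddh_KG k L x) G =
  Ex (dunif (Zq L)) (fun u => Ex (dunif (Zq L)) (fun v =>
     G ((x.2 ^+ u * x.1.2 ^+ v)%g, (x.1.1 ^+ u * gexp L v)%g))).
Proof. case: x => [[al be] ga]; exact: Ex_KG. Qed.

Lemma Sm_eq Gen k P : Pr (Sm1 (ddh_hash_system Gen) k) P = Pr (Sm2 (ddh_hash_system Gen) k) P.
Proof.
rewrite !Pr_Ex /Sm1 /Sm2 Ex_dbind [RHS]Ex_dbind; apply: Ex_eq => L.
rewrite Ex_dbind [RHS]Ex_dbind.
change (IS _ k L true) with (ddh_IS k L true); rewrite !Ex_IS_true.
apply: Ex_eq => a; apply: Ex_eq => b; apply: Ex_unif_eq => c Hc.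
move: Hc; rewrite /filt mem_filter mem_iota add0n => /andP [Hne Hcq].
rewrite Ex_dbind [RHS]Ex_dbind.
change (KG _ k L ?x) with (ddh_KG k L x); rewrite !Ex_KG' /=.
have E : undup [seq ddh_Hash k L (gexp L a, gexp L b, gexp L c) hk | hk <- enum (gT L)] = enum (gT L).
  by rewrite (@eq_map _ _ _ id) // map_id undup_id ?enum_uniq.
rewrite E.
under Ex_eq => u do under Ex_eq => v do rewrite Ex_dret.
under [RHS]Ex_eq => u do under Ex_eq => v do rewrite Ex_dbind.
under [RHS]Ex_eq => u do under Ex_eq => v do under Ex_eq => y do rewrite Ex_dret.
exact: (smooth_core L (fun y pk => (P (existT (fun L0 : gdesc => (ddhX L0 * gT L0 * gT L0)%type) L
   (gexp L a, gexp L b, gexp L c, pk, y)))%:R) a b c Hcq Hne).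
Qed.

Section HM.
Variable Gen : nat -> dist gdesc.
Variable D : nat -> DDH_out -> bool.
Variable k : nat.

Definition ind L (t : gT L * gT L * gT L) : rat :=
  (D k (existT (fun L => (gT L * gT L * gT L)%type) L t))%:R.

Definition H1 L := Ex (dunif (Zq L)) (fun a => Ex (dunif (Zq L)) (fun b =>
  ind L (gexp L a, gexp L b, gexp L (a * b)))).
Definition H2 L := Ex (dunif (Zq L)) (fun a => Ex (dunif (Zq L)) (fun b =>
  Ex (dunif (filt L a b)) (fun c => ind L (gexp L a, gexp L b, gexp L c)))).
Definition D2 L := Ex (dunif (Zq L)) (fun a => Ex (dunif (Zq L)) (fun b =>
  Ex (dunif (Zq L)) (fun c => ind L (gexp L a, gexp L b, gexp L c)))).

Lemma Pr_DDH1 : Pr (DDH1 Gen k) (D k) = Ex (Gen k) H1.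
Proof.
rewrite Pr_Ex /DDH1 Ex_dbind; apply: Ex_eq => L; rewrite Ex_dbind; apply: Ex_eq => a.
rewrite Ex_dbind; apply: Ex_eq => b; by rewrite Ex_dret.
Qed.

Lemma Pr_DDH2 : Pr (DDH2 Gen k) (D k) = Ex (Gen k) D2.
Proof.
rewrite Pr_Ex /DDH2 Ex_dbind; apply: Ex_eq => L; rewrite Ex_dbind; apply: Ex_eq => a.
rewrite Ex_dbind; apply: Ex_eq => b; rewrite Ex_dbind; apply: Ex_eq => c; by rewrite Ex_dret.
Qed.

Lemma Pr_Hm1 : Pr (Hm1 (ddh_hash_system Gen) k) (D k) = Ex (Gen k) H1.
Proof.
rewrite Pr_Ex /Hm1 Ex_dbind; apply: Ex_eq => L; rewrite Ex_dbind.
change (IS _ k L false) with (ddh_IS k L false); rewrite Ex_IS_false.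
apply: Ex_eq => a; apply: Ex_eq => b; by rewrite Ex_dret.
Qed.

Lemma Pr_Hm2 : Pr (Hm2 (ddh_hash_system Gen) k) (D k) = Ex (Gen k) H2.
Proof.
rewrite Pr_Ex /Hm2 Ex_dbind; apply: Ex_eq => L; rewrite Ex_dbind.
change (IS _ k L true) with (ddh_IS k L true); rewrite Ex_IS_true.
apply: Ex_eq => a; apply: Ex_eq => b; apply: Ex_eq => c; by rewrite Ex_dret.
Qed.
End HM.

Lemma sum_split L m (g : nat -> rat) : (m < gq L)%N ->
  \sum_(c <- Zq L) g c = g m + \sum_(c <- [seq c <- Zq L | c != m]) g c.
Proof.
move=> Hm; rewrite (bigD1_seq m) ?big_filter //= ?iota_uniq //.
by rewrite /Zq mem_iota add0n Hm.
Qed.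

Lemma size_filt L m : (m < gq L)%N ->
  (size [seq c <- Zq L | c != m])%:R = (gq L)%:R - 1 :> rat.
Proof.
move=> Hm; have := sum_split L m (fun _ => 1) Hm.
rewrite !sum_cst size_Zq !mulr1 => ->; ring.
Qed.

Lemma Ex_split L m (f : nat -> rat) : (m < gq L)%N ->
  Ex (dunif (Zq L)) f = (gq L)%:R^-1 * f m +
     (1 - (gq L)%:R^-1) * Ex (dunif [seq c <- Zq L | c != m]) f.
Proof.
move=> Hm; rewrite !Ex_dunif size_Zq (sum_split L m f Hm) (size_filt _ _ Hm).
have q0 := q_neq0 L.
have q1 : (gq L)%:R - 1 != 0 :> rat.
  rewrite subr_eq0 (_ : 1 = 1%:R) // eqr_nat; apply/negP => /eqP E.
  by have := q_gt1 L; rewrite E.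
field; by apply/andP.
Qed.

Lemma gexp_mod L n : gexp L (n %% gq L) = gexp L n.
Proof. by rewrite /gexp -order_gen expg_mod_order. Qed.

Lemma D2_split D k L :
  D2 D k L = (gq L)%:R^-1 * H1 D k L + (1 - (gq L)%:R^-1) * H2 D k L.
Proof.
rewrite /D2 /H1 /H2 -Ex_lin; apply: Ex_eq => a; rewrite -Ex_lin; apply: Ex_eq => b.
have Hm : ((a * b) %% gq L < gq L)%N by rewrite ltn_pmod // ltnW // q_gt1.
by rewrite (Ex_split _ _ _ Hm) gexp_mod.
Qed.

Lemma Zq_nil L : Zq L <> [::].
Proof. by rewrite /Zq; have := q_gt1 L; case: (gq L). Qed.

Lemma filt_nil L a b : filt L a b <> [::].
Proof.
have Hm : ((a * b) %% gq L < gq L)%N by rewrite ltn_pmod // ltnW // q_gt1.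
move=> E; have := size_filt _ _ Hm; rewrite -/(filt L a b) E /= => /eqP.
rewrite eq_sym subr_eq0 (_ : 1 = 1%:R) // eqr_nat => /eqP E1.
by have := q_gt1 L; rewrite E1.
Qed.

Lemma Ex_unif_le {T : eqType} (s : seq T) f c : s <> [::] ->
  (forall x, x \in s -> f x <= c) -> Ex (dunif s) f <= c.
Proof.
move=> Hs H; rewrite -[X in _ <= X](Ex_unif_cst s c Hs) !Ex_dunif.
apply: ler_wpM2l; first by rewrite invr_ge0 ler0n.
by rewrite big_seq [X in _ <= X]big_seq; apply: ler_sum => x /H.
Qed.

Lemma Ex_unif_ge {T : eqType} (s : seq T) f c : s <> [::] ->
  (forall x, x \in s -> c <= f x) -> c <= Ex (dunif s) f.
Proof.
move=> Hs H; rewrite -[X in X <= _](Ex_unif_cst s c Hs) !Ex_dunif.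
apply: ler_wpM2l; first by rewrite invr_ge0 ler0n.
by rewrite big_seq [X in _ <= X]big_seq; apply: ler_sum => x /H.
Qed.

Lemma ind01 D k L t : 0 <= ind D k L t <= 1.
Proof. by rewrite /ind; case: (D _ _). Qed.

Lemma H1_01 D k L : 0 <= H1 D k L <= 1.
Proof.
apply/andP; split.
  apply: Ex_unif_ge (Zq_nil L) _ => a _; apply: Ex_unif_ge (Zq_nil L) _ => b _.
  by case/andP: (ind01 D k L (gexp L a, gexp L b, gexp L (a * b))).
apply: Ex_unif_le (Zq_nil L) _ => a _; apply: Ex_unif_le (Zq_nil L) _ => b _.
by case/andP: (ind01 D k L (gexp L a, gexp L b, gexp L (a * b))).
Qed.

Lemma H2_01 D k L : 0 <= H2 D k L <= 1.
Proof.
apply/andP; split.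
  apply: Ex_unif_ge (Zq_nil L) _ => a _; apply: Ex_unif_ge (Zq_nil L) _ => b _.
  apply: Ex_unif_ge (filt_nil L a b) _ => c _.
  by case/andP: (ind01 D k L (gexp L a, gexp L b, gexp L c)).
apply: Ex_unif_le (Zq_nil L) _ => a _; apply: Ex_unif_le (Zq_nil L) _ => b _.
apply: Ex_unif_le (filt_nil L a b) _ => c _.
by case/andP: (ind01 D k L (gexp L a, gexp L b, gexp L c)).
Qed.

Definition small c k L : rat := ((gq L <= k ^ c)%N)%:R.

Lemma Pr_DDH1_dlog Gen c k :
  Pr (DDH1 Gen k) (dlog_test c k) = Ex (Gen k) (small c k).
Proof.
rewrite Pr_Ex /DDH1 Ex_dbind; apply: Ex_eq => L; rewrite Ex_dbind.
rewrite -(Ex_unif_cst (Zq L) (small c k L) (Zq_nil L)); apply: Ex_unif_eq => a Ha.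
rewrite Ex_dbind -(Ex_unif_cst (Zq L) (small c k L) (Zq_nil L)); apply: Ex_unif_eq => b Hb.
rewrite Ex_dret /dlog_test /= /small; case: (gq L <= k ^ c)%N => //=.
suff -> : has (fun i => (gexp L b == gexp L i) && (gexp L (a * b) == (gexp L a ^+ i)%g)) (iota 0 (gq L)) by [].
by apply/hasP; exists b => //; rewrite eqxx /gexp expgM eqxx.
Qed.

Lemma test_le L c k a b x : (x < gq L)%N ->
  ((dlog_test c k (existT (fun L => (gT L * gT L * gT L)%type) L
     (gexp L a, gexp L b, gexp L x)))%:R : rat)
  <= small c k L * (x == ((a * b) %% gq L)%N)%:R.
Proof.
move=> Hx; rewrite /dlog_test /= /small; case: (gq L <= k ^ c)%N => //=; last by rewrite mul0r.
case H: has => /=; last by rewrite mul1r ler0n.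
move/hasP: H => [i Hi /andP [/eqP Hb /eqP Hc]].
suff -> : x == ((a * b) %% gq L)%N by rewrite mul1r.
have : gexp L x == gexp L (a * b).
  rewrite Hc /gexp -expgM mulnC expgM -/(gexp L i) -Hb /gexp -expgM mulnC.
  by [].
by rewrite gexp_eq modn_small.
Qed.

Lemma Ex_nonneg_ge0 {T : Type} (d : dist T) f : nonneg d -> (forall x, 0 <= f x) -> 0 <= Ex d f.
Proof.
move=> Hn H; have := Ex_ler d (fun _ => 0) f Hn H.
by rewrite /Ex big1 // => p _; rewrite mulr0.
Qed.

Lemma Ex_unif_ler {T : eqType} (s : seq T) f g :
  (forall x, x \in s -> f x <= g x) -> Ex (dunif s) f <= Ex (dunif s) g.
Proof.
move=> H; rewrite !Ex_dunif; apply: ler_wpM2l; first by rewrite invr_ge0 ler0n.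
by rewrite big_seq [X in _ <= X]big_seq; apply: ler_sum => x /H.
Qed.

Lemma Pr_DDH2_dlog Gen c k : (forall k, is_dist (Gen k)) ->
  Pr (DDH2 Gen k) (dlog_test c k) <= Ex (Gen k) (fun L => 2^-1 * small c k L).
Proof.
move=> Gd; rewrite Pr_Ex /DDH2 Ex_dbind; apply: Ex_ler; first by case: (Gd k).
move=> L; rewrite Ex_dbind; apply: Ex_unif_le (Zq_nil L) _ => a _.
rewrite Ex_dbind; apply: Ex_unif_le (Zq_nil L) _ => b _.
rewrite Ex_dbind.
have Hm : ((a * b) %% gq L < gq L)%N by rewrite ltn_pmod // ltnW // q_gt1.
apply: (@le_trans _ _ (Ex (dunif (Zq L)) (fun x => small c k L * (x == ((a * b) %% gq L)%N)%:R))).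
  apply: Ex_unif_ler => x; rewrite Ex_dret /Zq mem_iota add0n => Hx.
  exact: test_le.
rewrite (Ex_split _ _ _ Hm) eqxx mulr1.
have -> : Ex (dunif [seq c <- Zq L | c != ((a * b) %% gq L)%N])
   (fun x => small c k L * (x == ((a * b) %% gq L)%N)%:R) = 0.
  rewrite Ex_dunif big_seq big1 ?mulr0 // => x; rewrite mem_filter => /andP [/negbTE -> _].
  by rewrite mulr0.
rewrite mulr0 addr0.
have q2 : 2 <= (gq L)%:R :> rat by rewrite ler_nat q_gt1.
have s0 : 0 <= small c k L by rewrite /small ler0n.
have : (gq L)%:R^-1 <= 2^-1 :> rat.
  by rewrite lef_pV2 ?posrE //; lra.
move=> h; by apply: ler_wpM2r.
Qed.

Lemma Ex_scale {T : Type} (d : dist T) a f : Ex d (fun x => a * f x) = a * Ex d f.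
Proof. by rewrite /Ex mulr_sumr; apply: eq_bigr => p _; ring. Qed.

Theorem theorem5
  (Eff : forall T : Type, (nat -> T -> bool) -> Prop)
  (Eff_dlog_test : forall c : nat, Eff DDH_out (dlog_test c))
  (Gen : nat -> dist gdesc)
  (Gen_dist : forall k : nat, is_dist (Gen k))
  (hDDH : DDH_hard Eff Gen) :
  SPHDH (ddh_hash_system Gen) Eff.
Proof.
split.
- exact: projection_ok.
- exact: distinguish_ok.
- move=> D _ c; exists 1%N => k k1.
  by rewrite Sm_eq subrr normr0 invr_gt0 ltr0n expn_gt0 k1.
- move=> D HD.
  have HD' : Eff DDH_out D := HD.
  have Gn : forall k, nonneg (Gen k) by move=> k; case: (Gen_dist k).
  apply: (@neg_final _ (fun k => Pr (DDH1 Gen k) (D k) - Pr (DDH2 Gen k) (D k))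
            (fun c k => Ex (Gen k) (small c k))
            (fun c k => Pr (DDH1 Gen k) (dlog_test c k) - Pr (DDH2 Gen k) (dlog_test c k))).
  + exact: hDDH HD'.
  + by move=> c; apply: hDDH.
  + move=> c k k0.
    rewrite (Pr_Hm1 Gen D k) (Pr_Hm2 Gen D k) Pr_DDH1 Pr_DDH2 -!Ex_sub.
    have -> : Ex (Gen k) (fun x => H1 D k x - H2 D k x - (H1 D k x - D2 D k x))
       = Ex (Gen k) (fun L => (gq L)%:R^-1 * (H1 D k L - H2 D k L)).
      apply: Ex_eq => L; rewrite D2_split; ring.
    apply: (le_trans (Ex_norm (Gen k) _ (Gn k))).
    rewrite -(Ex_total (Gen k) (((k ^ c)%:R)^-1) (Gen_dist k)).
    rewrite (_ : Ex (Gen k) (small c k) + Ex (Gen k) (fun=> ((k ^ c)%:R)^-1) =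
       Ex (Gen k) (fun L => 1 * small c k L + 1 * ((k ^ c)%:R)^-1)); last by rewrite Ex_lin !mul1r.
    apply: Ex_ler => // L; rewrite !mul1r normrM.
    have := H1_01 D k L; have := H2_01 D k L => /andP [a1 a2] /andP [b1 b2].
    have hd : `|H1 D k L - H2 D k L| <= 1.
      rewrite ler_norml; apply/andP; split; lra.
    have qi : 0 <= (gq L)%:R^-1 :> rat by rewrite invr_ge0 ler0n.
    rewrite ger0_norm //.
    apply: (@le_trans _ _ ((gq L)%:R^-1)).
      by rewrite -[X in _ <= X]mulr1; apply: ler_wpM2l.
    rewrite /small; case: leqP => Hq.
      have : (gq L)%:R^-1 <= 1 :> rat.
        rewrite invr_le1 ?unitfE ?q_neq0 //; last by rewrite ltr0n ltnW // q_gt1.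
        by rewrite ler1n ltnW // q_gt1.
      have : 0 <= ((k ^ c)%:R)^-1 :> rat by rewrite invr_ge0 ler0n.
      move=> h1 h2; have -> : true%:R = 1 :> rat by []. lra.
    rewrite [false%:R]/(0%:R) add0r lef_pV2 ?posrE ?ltr0n ?expn_gt0 ?k0.
    all: rewrite ?orTb ?ler_nat ?(ltnW Hq) //.
    by rewrite ltnW // q_gt1.
  + move=> c k.
    rewrite Pr_DDH1_dlog.
    have := Pr_DDH2_dlog Gen c k Gen_dist; rewrite Ex_scale.
    have : 0 <= Ex (Gen k) (small c k).
      by apply: Ex_nonneg_ge0 => // L; rewrite /small ler0n.
    lra.
Qed.
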